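(* Let $n$ be even. Up to scaling there is a unique non-zero $\mathrm{GL}_n(\mathbb{R})$-equivariant map $(\mathbb{P}(\mathbb{R}^n))^{q}\to\mathbb{R}_\varepsilon$ for $q=n+1$, and there is no non-zero such map for $q\le n$.
   Context: $\mathbb{P}(\mathbb{R}^n)$ is real projective space with the diagonal $\mathrm{GL}_n(\mathbb{R})$-action on tuples. $\mathbb{R}_\varepsilon$ denotes $\mathbb{R}$ with $g\in\mathrm{GL}_n(\mathbb{R})$ acting by multiplication by $\varepsilon(g)=\operatorname{sign}\det g$. A map $f$ is equivariant if $f(gx_0,\dots,gx_{q-1})=\varepsilon(g)f(x_0,\dots,x_{q-1})$ for all $g$ and all tuples (arbitrary functions, no measurability required). *)

(* Defs.v *)
From HB Require Import structures.
From mathcomp Require Export all_boot all_order all_algebra.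
Set Implicit Arguments. Unset Strict Implicit. Unset Printing Implicit Defensive.
Import Order.TTheory GRing.Theory Num.Theory.
Local Open Scope ring_scope.

Section Projective.
Variables (R : rcfType) (n : nat).

(* The picked index only depends on the support of v, hence
   pnormalize (c *: v) = pnormalize v for c != 0. *)
Definition pnormalize (v : 'cV[R]_n) : 'cV[R]_n :=
  match [pick i : 'I_n | v i ord0 != 0] with
  | Some i => (v i ord0)^-1 *: v
  | None => v
  end.

Definition pnormal (v : 'cV[R]_n) : bool := (v != 0) && (pnormalize v == v).

(* Real projective space P(R^n): non-zero vectors modulo scaling, each class
   represented by its unique normalized representative. *)
Definition proj := {v : 'cV[R]_n | pnormal v}.

(* Action of g in GL_n on P(R^n): [v] |-> [g v].  (The default p in insubd
   is never used when g is invertible.) *)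
Definition pact (g : 'M[R]_n) (p : proj) : proj :=
  insubd p (pnormalize (g *m val p)).

Definition epsilon (g : 'M[R]_n) : R := Num.sg (\det g).

Definition equivariant (q : nat) (f : ('I_q -> proj) -> R) : Prop :=
  forall g : 'M[R]_n, g \in unitmx ->
  forall x : 'I_q -> proj, f (fun i => pact g (x i)) = epsilon g * f x.

End Projective.

(* Main.v *)
Require Import Defs.
From HB Require Import structures.
From mathcomp Require Import all_boot all_order all_algebra.
From Stdlib Require Import FunctionalExtensionality.
Import Order.TTheory GRing.Theory Num.Theory.
Local Open Scope ring_scope.

Section S.
Variables (R : rcfType) (n : nat).
Local Notation proj := (proj R n).

Definition pscale (v : 'cV[R]_n) : R :=
  match [pick i : 'I_n | v i ord0 != 0] with
  | Some i => (v i ord0)^-1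
  | None => 1
  end.

Lemma pscaleE (v : 'cV[R]_n) : pnormalize v = pscale v *: v.
Proof. by rewrite /pnormalize /pscale; case: pickP => // _; rewrite scale1r. Qed.

Lemma pscale_neq0 (v : 'cV[R]_n) : pscale v != 0.
Proof. by rewrite /pscale; case: pickP => [i Hi|_]; rewrite ?invr_eq0 ?oner_eq0. Qed.

Lemma pnormalizeZ (v : 'cV[R]_n) c : c != 0 -> pnormalize (c *: v) = pnormalize v.
Proof.
move=> c0; rewrite /pnormalize.
have -> : [pick i | (c *: v) i ord0 != 0] = [pick i | v i ord0 != 0].
  by apply: eq_pick => i /=; rewrite mxE mulf_eq0 negb_or c0.
case: pickP => [i _|H].
  by rewrite mxE scalerA invfM mulrAC mulVf // mul1r.
have -> : v = 0 by apply/matrixP => i j; rewrite (ord1 j) mxE; move: (H i) => /= /negbFE/eqP.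
by rewrite scaler0.
Qed.

Lemma pnormal_pnormalize (v : 'cV[R]_n) : v != 0 -> pnormal (pnormalize v).
Proof.
move=> v0; rewrite /pnormal pscaleE scaler_eq0 negb_or pscale_neq0 v0 /=.
by rewrite pnormalizeZ ?pscale_neq0 // pscaleE.
Qed.

Lemma pnormalK (p : proj) : pnormalize (val p) = val p.
Proof. by case/andP: (valP p) => _ /eqP. Qed.

Lemma proj_neq0 (p : proj) : val p != 0.
Proof. by case/andP: (valP p). Qed.

Lemma val_pact (g : 'M[R]_n) (p : proj) : g \in unitmx -> val (pact g p) = pnormalize (g *m val p).
Proof.
move=> gu; rewrite /pact val_insubd pnormal_pnormalize //.
apply: contra (proj_neq0 p) => /eqP H.
by rewrite -(mulKmx gu (val p)) H mulmx0.
Qed.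

Lemma pact_to (g : 'M[R]_n) (p q : proj) c : g \in unitmx -> c != 0 ->
  g *m val p = c *: val q -> pact g p = q.
Proof. by move=> gu c0 H; apply: val_inj; rewrite val_pact // H pnormalizeZ // pnormalK. Qed.

Lemma mdl (u : 'cV[R]_n) (w : 'rV[R]_n) : \det (1%:M + u *m w) = 1 + (w *m u) 0 0.
Proof.
pose L := block_mx (1%:M : 'M[R]_n) (0 : 'M[R]_(n,1)) w (1%:M : 'M[R]_1).
pose U := block_mx (1%:M + u *m w) u (0 : 'M[R]_(1,n)) (1%:M : 'M[R]_1).
pose L' := block_mx (1%:M : 'M[R]_n) (0 : 'M[R]_(n,1)) (- w) (1%:M : 'M[R]_1).
have E : L *m U *m L' = block_mx 1%:M u 0 (1%:M + w *m u).
  rewrite /L /U /L' !mulmx_block !mul1mx !mul0mx !mulmx0 !mulmx1 !addr0 !add0r.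
  congr block_mx; first by rewrite mulmxN addrK.
    by rewrite mulmxDr mulmx1 mulmxN mulmxDl mul1mx mulmxA [X in _ - X]addrC subrr.
  by rewrite addrC.
have := congr1 determinant E.
rewrite !det_mulmx /L /U /L' det_lblock det_lblock det_ublock det_ublock !det1 !mul1r mulr1.
rewrite mulr1 => ->; by rewrite det_mx11 !mxE.
Qed.

Lemma mx11_eq0 (M : 'M[R]_1) : M 0 0 = 0 -> M = 0.
Proof. by move=> H; rewrite [M]mx11_scalar H; apply/matrixP=> i j; rewrite !mxE mul0rn. Qed.

Lemma vanish q (f : ('I_q -> proj) -> R) x (u : 'cV[R]_n) (w : 'rV[R]_n) :
  equivariant f -> w *m u = 1%:M ->
  (forall j, w *m val (x j) = 0 \/ u *m (w *m val (x j)) = val (x j)) -> f x = 0.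
Proof.
move=> Hf wu Hx.
pose g := 1%:M + ((- 2%:R) *: u) *m w.
have dg : \det g = -1.
  by rewrite /g mdl -scalemxAr wu !mxE /= mulr1 mulr2n opprD addrA subrr add0r.
have gu : g \in unitmx by rewrite unitmxE dg unitrN unitr1.
have eg : epsilon g = -1 by rewrite /epsilon dg sgrN sgr1.
have Efix : (fun i => pact g (x i)) = x.
  apply: functional_extensionality => j.
  have gx : g *m val (x j) = val (x j) + (- 2%:R) *: (u *m (w *m val (x j))).
    by rewrite /g mulmxDl mul1mx -!scalemxAl -mulmxA.
  case: (Hx j) => H.
  - apply: (@pact_to _ _ _ 1) => //; first exact: oner_neq0.
    by rewrite gx H mulmx0 scaler0 addr0 scale1r.
  - apply: (@pact_to _ _ _ (-1)) => //; first by rewrite oppr_eq0 oner_neq0.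
    by rewrite gx H -{1}(scale1r (val (x j))) -scalerDl mulr2n opprD addrA subrr add0r.
have := Hf g gu x; rewrite Efix eg mulN1r => /eqP.
rewrite -subr_eq0 opprK -mulr2n mulrn_eq0 /= => /eqP //.
Qed.

Lemma vanish_hyp0 q (f : ('I_q -> proj) -> R) x (w : 'rV[R]_n) :
  equivariant f -> w != 0 -> (forall j, w *m val (x j) = 0) -> f x = 0.
Proof.
move=> Hf w0 Hx.
case: (pickP (fun r => w 0 r != 0)) => [r Hr | H]; last first.
  case/eqP: w0; apply/matrixP => i j; rewrite (ord1 i) mxE.
  by move: (H j) => /= /negbFE/eqP.
apply: (@vanish q f x ((w 0 r)^-1 *: delta_mx r 0) w) => //.
  rewrite -scalemxAr -colE; apply/matrixP => i j; rewrite (ord1 i) (ord1 j) !mxE /=.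
  by rewrite mulVf.
by move=> j; left.
Qed.

Lemma vanish_hyp q (f : ('I_q -> proj) -> R) x (w : 'rV[R]_n) (k : 'I_q) :
  equivariant f -> w != 0 -> (forall j, j != k -> w *m val (x j) = 0) -> f x = 0.
Proof.
move=> Hf w0 Hx.
case: (eqVneq (w *m val (x k)) 0) => [H0|Hk].
  apply: (@vanish_hyp0 q f x w) => // j.
  by case: (eqVneq j k) => [->|/Hx].
set a := (w *m val (x k)) 0 0.
have a0 : a != 0 by apply: contra Hk => /eqP /mx11_eq0 ->.
have E : w *m val (x k) = a%:M by rewrite [LHS]mx11_scalar.
apply: (@vanish q f x (a^-1 *: val (x k)) w) => //.
  by rewrite -scalemxAr E scale_scalar_mx mulVf.
move=> j; case: (eqVneq j k) => [->|/Hx]; last by left.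
by right; rewrite E mul_mx_scalar scalerA mulfV // scale1r.
Qed.

Lemma col_entry (A : 'M[R]_n) (v : 'cV[R]_n) (w : 'rV[R]_n) c :
  (forall r, A r c = v r 0) -> (w *m A) 0 c = (w *m v) 0 0.
Proof. by move=> H; rewrite !mxE; apply: eq_bigr => r _; rewrite H. Qed.

Lemma part2 (hn : (0 < n)%N) q : (q <= n)%N ->
  forall f : ('I_q -> proj) -> R, equivariant f -> forall x, f x = 0.
Proof.
case: q => [|q] hq f Hf x.
  apply: (@vanish_hyp0 0 f x (delta_mx 0 (Ordinal hn))) => //; last by case.
  apply/eqP => /matrixP /(_ 0 (Ordinal hn)); rewrite !mxE !eqxx /=.
  by move/eqP; rewrite oner_eq0.
pose A : 'M[R]_n := \matrix_(r, c) (if (c.+1 < q.+1)%N then val (x (inord c.+1)) r 0 else 0).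
have hn1 : (n.-1 < n)%N by rewrite ltn_predL.
have dA : \det A == 0.
  rewrite (expand_det_col _ (Ordinal hn1)) big1 // => i _; rewrite mxE /=.
  by rewrite prednK // ltnS leqNgt hq /= mul0r.
case/det0P: dA => w w0 wA.
apply: (@vanish_hyp q.+1 f x w ord0) => // j j0.
have hj : (j.-1 < n)%N.
  by apply: leq_ltn_trans (leq_pred j) (leq_trans (ltn_ord j) hq).
apply: mx11_eq0; rewrite -(@col_entry A _ _ (Ordinal hj)); first by rewrite wA mxE.
move=> r; rewrite mxE /= prednK ?lt0n // ltn_ord.
by congr (val (x _) r 0); apply: val_inj; rewrite /= inordK.
Qed.

Definition Mi (x : 'I_n.+1 -> proj) (i : 'I_n.+1) : 'M[R]_n :=
  \matrix_(r, j) val (x (lift i j)) r ord0.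
Definition F (x : 'I_n.+1 -> proj) : R := Num.sg (\prod_i \det (Mi x i)).

Lemma Mi_entry (w : 'rV[R]_n) x i j : (w *m Mi x i) 0 j = (w *m val (x (lift i j))) 0 0.
Proof. by apply: col_entry => r; rewrite mxE. Qed.

Lemma Mi_pact (g : 'M[R]_n) x i : g \in unitmx ->
  Mi (fun k => pact g (x k)) i =
  g *m Mi x i *m diag_mx (\row_j pscale (g *m val (x (lift i j)))).
Proof.
move=> gu; apply/matrixP => r j; rewrite mul_mx_diag mxE [in RHS]mxE [X in _ = _ * X]mxE.
rewrite val_pact // pscaleE mxE mulrC; congr (_ * _).
by rewrite !mxE; apply: eq_bigr => k _; rewrite mxE.
Qed.

Lemma F_equiv (hev : ~~ odd n) : equivariant F.
Proof.
move=> g gu x.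
set c := fun k => pscale (g *m val (x k)).
have E i : \det (Mi (fun k => pact g (x k)) i) = \det g * \det (Mi x i) * \prod_j c (lift i j).
  by rewrite Mi_pact // !det_mulmx det_diag; congr (_ * _); apply: eq_bigr => j _; rewrite mxE.
rewrite /F (eq_bigr _ (fun i _ => E i)) !big_split /= prodr_const card_ord.
pose P := \prod_k c k.
have cP i : P = c i * \prod_j c (lift i j) by rewrite /P (bigD1_ord i).
have P0 : P != 0 by apply/prodf_neq0 => k _; exact: pscale_neq0.
have S : \prod_i \prod_j c (lift i j) = P ^+ n.
  have : \prod_(i < n.+1) P = P * \prod_i \prod_j c (lift i j).
    transitivity (\prod_i (c i * \prod_j c (lift i j))); last by rewrite big_split.
    by apply: eq_bigr => i _; exact: cP.
  by rewrite prodr_const card_ord exprS => /mulfI ->.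
have Spos : 0 < P ^+ n by rewrite exprn_even_gt0 // P0 orbT.
have dg : \det g != 0 by rewrite -unitfE -unitmxE.
rewrite S !sgrM (gtr0_sg Spos) mulr1 exprSr sgrM gtr0_sg ?mul1r //.
by rewrite exprn_even_gt0 // dg orbT.
Qed.

Definition sv (k : 'I_n.+1) : 'cV[R]_n :=
  match unlift ord_max k with Some j => delta_mx j 0 | None => const_mx 1 end.

Lemma pnormalize_fix1 (v : 'cV[R]_n) :
  (forall i, v i 0 != 0 -> v i 0 = 1) -> pnormalize v = v.
Proof. by move=> H; rewrite /pnormalize; case: pickP => // i Hi; rewrite H // invr1 scale1r. Qed.

Lemma sv_pnormal (hn : (0 < n)%N) k : pnormal (sv k).
Proof.
rewrite /pnormal /sv; case: (unlift ord_max k) => [j|].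
  apply/andP; split.
    by apply/eqP => /matrixP /(_ j 0); rewrite !mxE !eqxx /=; move/eqP; rewrite oner_eq0.
  by apply/eqP/pnormalize_fix1 => i; rewrite mxE; case: (_ && _) => //; rewrite eqxx.
apply/andP; split.
  by apply/eqP => /matrixP /(_ (Ordinal hn) 0); rewrite !mxE; move/eqP; rewrite oner_eq0.
by apply/eqP/pnormalize_fix1 => i; rewrite mxE.
Qed.

Definition xs (hn : (0 < n)%N) : 'I_n.+1 -> proj :=
  fun k => exist _ (sv k) (sv_pnormal hn k).

Lemma mul_delta_entry (w : 'rV[R]_n) r : (w *m (delta_mx r 0 : 'cV[R]_n)) 0 0 = w 0 r.
Proof. by rewrite -(colE r w) mxE. Qed.

Lemma F_xs_neq0 (hn : (0 < n)%N) : F (xs hn) != 0.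
Proof.
rewrite /F sgr_eq0; apply/prodf_neq0 => i _; apply/negP => /det0P [w w0 wA].
have Hk k : k != i -> w *m sv k = 0.
  move=> ki; case: (unliftP i k) => [j Ej|Ej]; last by rewrite Ej eqxx in ki.
  by apply: mx11_eq0; rewrite Ej -(Mi_entry w (xs hn)) wA mxE.
have Hr r : lift ord_max r != i -> w 0 r = 0.
  move=> /Hk; rewrite /sv liftK => H.
  by rewrite -mul_delta_entry H mxE.
case/eqP: w0; apply/matrixP => z r; rewrite (ord1 z) [RHS]mxE.
case: (unliftP ord_max i) => [i' Ei|Ei]; last first.
  by apply: Hr; rewrite Ei eq_sym neq_lift.
case: (eqVneq r i') => [->|ri]; last by apply: Hr; rewrite Ei (inj_eq (@lift_inj _ _)).
have : w *m sv ord_max = 0 by apply: Hk; rewrite Ei neq_lift.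
rewrite /sv unlift_none => /matrixP /(_ 0 0); rewrite !mxE (bigD1 i') //= mxE mulr1.
rewrite big1 ?addr0 // => r' ri'; rewrite mxE mulr1; apply: Hr.
by rewrite Ei (inj_eq (@lift_inj _ _)).
Qed.

Lemma uniqF (hn : (0 < n)%N) (hev : ~~ odd n) (h : ('I_n.+1 -> proj) -> R) :
  equivariant h -> exists c : R, forall x, h x = c * F x.
Proof.
move=> Hh; exists (h (xs hn) / F (xs hn)) => x.
have HF := F_equiv hev.
have Hv : forall (w : 'rV[R]_n) k0, w != 0 -> (forall k, k != k0 -> w *m val (x k) = 0) ->
    h x = h (xs hn) / F (xs hn) * F x.
  move=> w k0 w0 Hw.
  by rewrite (@vanish_hyp _ h x w k0) // (@vanish_hyp _ F x w k0) // mulr0.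
set A := Mi x ord_max.
case: (eqVneq (\det A) 0) => [dA|dA].
  move/eqP/det0P: dA => [w w0 wA]; apply: (Hv w ord_max) => // k ko.
  case: (unliftP ord_max k) => [j Ej|Ej]; last by rewrite Ej eqxx in ko.
  by apply: mx11_eq0; rewrite Ej -(Mi_entry w x) -/A wA mxE.
have Au : A \in unitmx by rewrite unitmxE unitfE.
set a := invmx A *m val (x ord_max).
case: (pickP (fun j => a j 0 == 0)) => [j /= /eqP aj | Hnz].
  pose w : 'rV[R]_n := delta_mx 0 j *m invmx A.
  have wA : w *m A = delta_mx 0 j by rewrite /w mulmxKV.
  have w0 : w != 0.
    apply/eqP => w0; move: wA; rewrite w0 mul0mx => /matrixP /(_ 0 j).
    by rewrite !mxE !eqxx /=; move/eqP; rewrite eq_sym oner_eq0.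
  apply: (Hv w (lift ord_max j)) => // k kj.
  case: (unliftP ord_max k) => [j' Ej|Ej].
    apply: mx11_eq0; rewrite Ej -(Mi_entry w x) -/A wA mxE.
    rewrite Ej (inj_eq (@lift_inj _ _)) in kj.
    by rewrite (negbTE kj) andbF.
  have H0 : (w *m val (x k)) 0 0 = 0.
    by rewrite Ej /w -mulmxA -/a -rowE mxE; exact: aj.
  exact: (mx11_eq0 _ H0).
pose g := A *m diag_mx a^T.
have gu : g \in unitmx.
  rewrite unitmxE unitfE det_mulmx det_diag mulf_neq0 //.
  apply/prodf_neq0 => j _; rewrite mxE; exact: (negbT (Hnz j)).
have Efix : (fun k => pact g (xs hn k)) = x.
  apply: functional_extensionality => k.
  case: (unliftP ord_max k) => [j ->|->].
    apply: (@pact_to _ _ _ (a j 0)) => //; first exact: (negbT (Hnz j)).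
    rewrite /= /sv liftK /g -mulmxA.
    have -> : diag_mx a^T *m (delta_mx j 0 : 'cV[R]_n) = a j 0 *: delta_mx j 0.
      apply/matrixP => r z; rewrite mul_diag_mx !mxE.
      by case: (eqVneq r j) => [->|]; rewrite ?mulr1 ?mulr0 //= => _; rewrite mulr0.
    rewrite -scalemxAr -colE; congr (_ *: _).
    by apply/matrixP => r z; rewrite (ord1 z) !mxE.
  apply: (@pact_to _ _ _ 1) => //; first exact: oner_neq0.
  rewrite /= /sv unlift_none /g -mulmxA scale1r.
  have -> : diag_mx a^T *m (const_mx 1 : 'cV[R]_n) = a.
    by apply/matrixP => r z; rewrite (ord1 z) mul_diag_mx !mxE mulr1.
  by rewrite /a mulKVmx.
have F0 := F_xs_neq0 hn.
rewrite -Efix (Hh g gu) (HF g gu) mulrCA divfK //.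
Qed.

End S.

Theorem proposition3p1 (R : rcfType) (n : nat) (hn_even : ~~ odd n) (hn_pos : (0 < n)%N) :
  (exists f : ('I_n.+1 -> proj R n) -> R,
      equivariant f /\ (exists x, f x != 0) /\
      (forall h : ('I_n.+1 -> proj R n) -> R,
          equivariant h -> exists c : R, forall x, h x = c * f x))
  /\
  (forall q : nat, (q <= n)%N ->
     forall f : ('I_q -> proj R n) -> R, equivariant f -> forall x, f x = 0).
Proof.
split.
  exists (@F R n); split; first exact: F_equiv.
  split; first by exists (@xs R n hn_pos); exact: F_xs_neq0.
  by move=> h Hh; exact: uniqF.
by move=> q hq f Hf x; exact: (@part2 R n hn_pos q hq f Hf x).
Qed.
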